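(* Let $0\le V_0\le V_1\le\infty$. Then the set of points $p\in\bigcup_{V\in[V_0,V_1]}S_V$ whose forward semiorbit $\{f^k(p)\}_{k\ge0}$ is bounded is a closed subset of $\mathbb{R}^3$.
   Context: $f:\mathbb{R}^3\to\mathbb{R}^3$, $f(x,y,z)=(2xy-z,x,y)$. The Fricke–Vogt character is $I(x,y,z)=x^2+y^2+z^2-2xyz-1$, which satisfies $I\circ f=I$, and $S_V=\{p\in\mathbb{R}^3: I(p)=V\}$ for $V\ge0$ (for $V_1=\infty$ the union is over $[V_0,\infty)$). *)

(* Defs.v *)
From Stdlib Require Import Reals.
Open Scope R_scope.

Definition pt := (R * R * R)%type.

Definition f (p : pt) : pt :=
  let '(x, y, z) := p in (2 * x * y - z, x, y).

Definition FV (p : pt) : R :=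
  let '(x, y, z) := p in x ^ 2 + y ^ 2 + z ^ 2 - 2 * x * y * z - 1.

Definition dist3 (p q : pt) : R :=
  let '(x1, y1, z1) := p in let '(x2, y2, z2) := q in
  sqrt ((x1 - x2) ^ 2 + (y1 - y2) ^ 2 + (z1 - z2) ^ 2).

Definition open3 (U : pt -> Prop) : Prop :=
  forall p, U p -> exists eps, 0 < eps /\ forall q, dist3 p q < eps -> U q.

Definition closed3 (A : pt -> Prop) : Prop := open3 (fun p => ~ A p).

(* Extended upper bound: None = +infinity *)
Definition le_ext (V : R) (V1 : option R) : Prop :=
  match V1 with None => True | Some v => V <= v end.

Definition in_union_S (V0 : R) (V1 : option R) (p : pt) : Prop :=
  exists V, V0 <= V /\ le_ext V V1 /\ FV p = V.

Definition bounded_fwd_orbit (p : pt) : Prop :=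
  exists M, forall k : nat, dist3 (Nat.iter k f p) (0, 0, 0) <= M.

(* Main.v *)
Require Import Defs.
From Stdlib Require Import Reals.
From Stdlib Require Import Lra Lia Psatz ZArith Classical.
Open Scope R_scope.
Notation F := Defs.f.

Definition PX (p : pt) : R := fst (fst p).
Definition PY (p : pt) : R := snd (fst p).
Definition PZ (p : pt) : R := snd p.

Lemma PX_f (t : pt) : PX (F t) = 2 * PX t * PY t - PZ t.
Proof. destruct t as [[x y] z]; reflexivity. Qed.
Lemma PY_f (t : pt) : PY (F t) = PX t.
Proof. destruct t as [[x y] z]; reflexivity. Qed.
Lemma PZ_f (t : pt) : PZ (F t) = PY t.
Proof. destruct t as [[x y] z]; reflexivity. Qed.

Lemma FV_XYZ (t : pt) : FV t = PX t ^ 2 + PY t ^ 2 + PZ t ^ 2 - 2 * PX t * PY t * PZ t - 1.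
Proof. destruct t as [[x y] z]; reflexivity. Qed.

Lemma FV_f (t : pt) : FV (F t) = FV t.
Proof. destruct t as [[x y] z]; simpl; ring. Qed.

Lemma FV_iter k (p : pt) : FV (Nat.iter k F p) = FV p.
Proof. induction k; simpl; [reflexivity|]. rewrite FV_f; auto. Qed.

Lemma sqrt_ge_abs (u v : R) : u * u <= v -> Rabs u <= sqrt v.
Proof.
  intro H. rewrite <- sqrt_Rsqr_abs. apply sqrt_le_1_alt. unfold Rsqr. exact H.
Qed.

Lemma dist_X (p q : pt) : Rabs (PX p - PX q) <= dist3 p q.
Proof.
  destruct p as [[x1 y1] z1], q as [[x2 y2] z2]; unfold dist3, PX; simpl.
  apply sqrt_ge_abs.
  pose proof (Rle_0_sqr (x1-x2)); pose proof (Rle_0_sqr (y1-y2)); pose proof (Rle_0_sqr (z1-z2)); unfold Rsqr in *; lra.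
Qed.
Lemma dist_Y (p q : pt) : Rabs (PY p - PY q) <= dist3 p q.
Proof.
  destruct p as [[x1 y1] z1], q as [[x2 y2] z2]; unfold dist3, PY; simpl.
  apply sqrt_ge_abs.
  pose proof (Rle_0_sqr (x1-x2)); pose proof (Rle_0_sqr (y1-y2)); pose proof (Rle_0_sqr (z1-z2)); unfold Rsqr in *; lra.
Qed.
Lemma dist_Z (p q : pt) : Rabs (PZ p - PZ q) <= dist3 p q.
Proof.
  destruct p as [[x1 y1] z1], q as [[x2 y2] z2]; unfold dist3, PZ; simpl.
  apply sqrt_ge_abs.
  pose proof (Rle_0_sqr (x1-x2)); pose proof (Rle_0_sqr (y1-y2)); pose proof (Rle_0_sqr (z1-z2)); unfold Rsqr in *; lra.
Qed.

Definition cont3 (g : pt -> R) : Prop :=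
  forall p eps, 0 < eps -> exists del, 0 < del /\
    forall q, dist3 p q < del -> Rabs (g q - g p) < eps.

Lemma cont3_ext g h : (forall p, g p = h p) -> cont3 g -> cont3 h.
Proof.
  intros E C p eps He. destruct (C p eps He) as [d [Hd Hq]].
  exists d; split; auto. intros q Hq'. rewrite <- !E. auto.
Qed.

Lemma cont3_X : cont3 PX.
Proof.
  intros p eps He. exists eps; split; auto. intros q Hq.
  rewrite Rabs_minus_sym. eapply Rle_lt_trans; [apply dist_X|exact Hq].
Qed.
Lemma cont3_Y : cont3 PY.
Proof.
  intros p eps He. exists eps; split; auto. intros q Hq.
  rewrite Rabs_minus_sym. eapply Rle_lt_trans; [apply dist_Y|exact Hq].
Qed.
Lemma cont3_PZ : cont3 PZ.
Proof.
  intros p eps He. exists eps; split; auto. intros q Hq.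
  rewrite Rabs_minus_sym. eapply Rle_lt_trans; [apply dist_Z|exact Hq].
Qed.

Lemma cont3_const c : cont3 (fun _ => c).
Proof.
  intros p eps He. exists 1; split; [lra|]. intros q _.
  replace (c - c) with 0 by ring. rewrite Rabs_R0; lra.
Qed.

Lemma cont3_plus g h : cont3 g -> cont3 h -> cont3 (fun p => g p + h p).
Proof.
  intros Cg Ch p eps He.
  destruct (Cg p (eps/2)) as [d1 [Hd1 H1]]; [lra|].
  destruct (Ch p (eps/2)) as [d2 [Hd2 H2]]; [lra|].
  exists (Rmin d1 d2); split; [apply Rmin_pos; auto|].
  intros q Hq.
  assert (A1 := H1 q (Rlt_le_trans _ _ _ Hq (Rmin_l _ _))).
  assert (A2 := H2 q (Rlt_le_trans _ _ _ Hq (Rmin_r _ _))).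
  replace (g q + h q - (g p + h p)) with ((g q - g p) + (h q - h p)) by ring.
  eapply Rle_lt_trans; [apply Rabs_triang|lra].
Qed.

Lemma cont3_opp g : cont3 g -> cont3 (fun p => - g p).
Proof.
  intros Cg p eps He. destruct (Cg p eps He) as [d [Hd H]].
  exists d; split; auto. intros q Hq.
  replace (- g q - - g p) with (- (g q - g p)) by ring. rewrite Rabs_Ropp; auto.
Qed.

Lemma cont3_minus g h : cont3 g -> cont3 h -> cont3 (fun p => g p - h p).
Proof.
  intros Cg Ch. apply (cont3_ext (fun p => g p + - h p)).
  - intros; ring.
  - apply cont3_plus; auto. apply cont3_opp; auto.
Qed.

Lemma cont3_mult g h : cont3 g -> cont3 h -> cont3 (fun p => g p * h p).
Proof.
  intros Cg Ch p eps He.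
  set (e1 := Rmin 1 (eps / (1 + Rabs (g p) + Rabs (h p)))).
  assert (Hpos : 0 < 1 + Rabs (g p) + Rabs (h p)).
  { pose proof (Rabs_pos (g p)); pose proof (Rabs_pos (h p)); lra. }
  assert (He1 : 0 < e1).
  { apply Rmin_pos; [lra|]. apply Rdiv_lt_0_compat; auto. }
  assert (He1a : e1 <= 1) by apply Rmin_l.
  assert (He1b : e1 * (1 + Rabs (g p) + Rabs (h p)) <= eps).
  { assert (e1 <= eps / (1 + Rabs (g p) + Rabs (h p))) by apply Rmin_r.
    apply (Rmult_le_compat_r (1 + Rabs (g p) + Rabs (h p))) in H; [|lra].
    unfold Rdiv in H. rewrite Rmult_assoc, Rinv_l in H; lra. }
  destruct (Cg p e1 He1) as [d1 [Hd1 H1]].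
  destruct (Ch p e1 He1) as [d2 [Hd2 H2]].
  exists (Rmin d1 d2); split; [apply Rmin_pos; auto|].
  intros q Hq.
  assert (A1 := H1 q (Rlt_le_trans _ _ _ Hq (Rmin_l _ _))).
  assert (A2 := H2 q (Rlt_le_trans _ _ _ Hq (Rmin_r _ _))).
  replace (g q * h q - g p * h p) with
    ((g q - g p) * (h q - h p) + g p * (h q - h p) + h p * (g q - g p)) by ring.
  eapply Rle_lt_trans; [apply Rabs_triang|].
  eapply Rle_lt_trans; [apply Rplus_le_compat_r; apply Rabs_triang|].
  rewrite !Rabs_mult.
  pose proof (Rabs_pos (g q - g p)); pose proof (Rabs_pos (h q - h p)).
  pose proof (Rabs_pos (g p)); pose proof (Rabs_pos (h p)).
  nra.
Qed.

Lemma cont3_abs g : cont3 g -> cont3 (fun p => Rabs (g p)).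
Proof.
  intros Cg p eps He. destruct (Cg p eps He) as [d [Hd H]].
  exists d; split; auto. intros q Hq.
  eapply Rle_lt_trans; [apply Rabs_triang_inv2|auto].
Qed.

Lemma cont3_iter k :
  cont3 (fun p => PX (Nat.iter k F p)) /\ cont3 (fun p => PY (Nat.iter k F p)) /\
  cont3 (fun p => PZ (Nat.iter k F p)).
Proof.
  induction k as [|k [IX [IY IZ]]].
  - simpl. split; [apply cont3_X|split; [apply cont3_Y|apply cont3_PZ]].
  - split; [|split].
    + apply (cont3_ext (fun p => 2 * PX (Nat.iter k F p) * PY (Nat.iter k F p) - PZ (Nat.iter k F p))).
      { intros p; simpl; rewrite PX_f; reflexivity. }
      apply cont3_minus; auto. apply cont3_mult; auto. apply cont3_mult; auto.
      apply cont3_const.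
    + apply (cont3_ext (fun p => PX (Nat.iter k F p))); auto.
      intros p; simpl; rewrite PY_f; reflexivity.
    + apply (cont3_ext (fun p => PY (Nat.iter k F p))); auto.
      intros p; simpl; rewrite PZ_f; reflexivity.
Qed.

Lemma cont3_FV : cont3 FV.
Proof.
  apply (cont3_ext (fun t => PX t * PX t + PY t * PY t + PZ t * PZ t - 2 * PX t * PY t * PZ t - 1)).
  { intros t; rewrite FV_XYZ; ring. }
  pose proof cont3_X; pose proof cont3_Y; pose proof cont3_PZ.
  repeat first [apply cont3_minus | apply cont3_plus | apply cont3_mult | apply cont3_const | assumption].
Qed.

Lemma pos_nbhd g (p : pt) : cont3 g -> 0 < g p ->
  exists eps, 0 < eps /\ forall q, dist3 p q < eps -> 0 < g q.
Proof.
  intros C H. destruct (C p (g p) H) as [d [Hd Hq]].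
  exists d; split; auto. intros q Hq'. specialize (Hq q Hq').
  apply Rabs_def2 in Hq. lra.
Qed.

Definition E (t : pt) : Prop :=
  Rabs (PX t) > Rabs (PY t) /\ Rabs (PY t) > 1 /\ Rabs (PZ t) < Rabs (PX t).

Lemma X_le_dist (t : pt) : Rabs (PX t) <= dist3 t (0,0,0).
Proof.
  pose proof (dist_X t (0,0,0)). unfold PX at 2 in H. simpl in H.
  rewrite Rminus_0_r in H. exact H.
Qed.

Lemma archi r : exists n : nat, r < INR n.
Proof.
  destruct (archimed r) as [H _].
  exists (Z.abs_nat (up r)). rewrite INR_IZR_INZ, Zabs2Nat.id_abs.
  assert (up r <= Z.abs (up r))%Z by lia.
  apply IZR_le in H0. lra.
Qed.

Lemma escape (p : pt) n : E (Nat.iter n F p) -> ~ bounded_fwd_orbit p.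
Proof.
  intros HE [M HM].
  set (a := Rabs (PX (Nat.iter n F p))).
  set (b := Rabs (PY (Nat.iter n F p))).
  set (dl := a * (2 * b - 2)).
  assert (Hb : b > 1) by (apply HE).
  assert (Hab : a > b) by (apply HE).
  assert (Hdl : 0 < dl) by (unfold dl; nra).
  assert (Cl : forall m : nat, E (Nat.iter (m + n) F p) /\
     Rabs (PY (Nat.iter (m + n) F p)) >= b /\
     Rabs (PX (Nat.iter (m + n) F p)) >= a + INR m * dl).
  { induction m as [|m [E1 [B1 C1]]].
    - simpl. split; auto. unfold a, b. lra.
    - replace (S m + n)%nat with (S (m + n)) by lia. simpl Nat.iter.
      set (t := Nat.iter (m + n) F p) in *.
      unfold E; rewrite PX_f, PY_f, PZ_f. rewrite S_INR.
      destruct E1 as [e1 [e2 e3]].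
      pose proof (Rabs_triang_inv (2 * PX t * PY t) (PZ t)) as T.
      rewrite !Rabs_mult in T. rewrite (Rabs_right 2) in T by lra.
      set (xx := Rabs (PX t)) in *. set (yy := Rabs (PY t)) in *.
      set (zz := Rabs (PZ t)) in *.
      set (w := Rabs (2 * PX t * PY t - PZ t)) in *.
      assert (w >= xx * (2 * yy - 1)) by nra.
      assert (INR m >= 0) by (apply Rle_ge, pos_INR).
      assert (a > 0) by lra.
      assert (xx >= a) by (pose proof (Rmult_le_pos _ _ (pos_INR m) (Rlt_le _ _ Hdl)); lra).
      assert (xx * (2*yy - 1) >= xx + a * (2*b - 2)).
      { assert ((xx - a) * (2*yy - 2) >= 0) by (apply Rle_ge, Rmult_le_pos; lra).
        assert (a * (2*yy - 2*b) >= 0) by (apply Rle_ge, Rmult_le_pos; lra).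
        lra. }
      unfold dl in *.
      repeat split; nra. }
  destruct (archi ((M - a) / dl)) as [m Hm].
  destruct (Cl m) as [_ [_ Hx]].
  specialize (HM (m + n)%nat). pose proof (X_le_dist (Nat.iter (m + n) F p)).
  assert (INR m * dl > M - a).
  { apply (Rmult_lt_compat_r dl) in Hm; auto. unfold Rdiv in Hm.
    rewrite Rmult_assoc, Rinv_l in Hm; lra. }
  lra.
Qed.

Lemma sq_abs_le x r : 0 <= r -> x * x <= r * r -> Rabs x <= r.
Proof.
  intros Hr H. destruct (Rle_lt_dec (Rabs x) r) as [|Hc]; auto.
  exfalso. assert (Rabs x * Rabs x = x * x) by (rewrite <- Rabs_mult; apply Rabs_right;
    nra). pose proof (Rabs_pos x). nra.
Qed.

Lemma abs_sq x : Rabs x * Rabs x = x * x.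
Proof. rewrite <- Rabs_mult. apply Rabs_right. nra. Qed.

Lemma key a s c e g I : 0 <= I ->
  a^2 + s^2 + c^2 - 2*a*s*c - 1 = I -> e = 2*a*s - c -> g = 2*e*a - s ->
  ~ (Rabs a > Rabs s /\ Rabs s > 1 /\ Rabs c < Rabs a) ->
  ~ (Rabs g > Rabs e /\ Rabs e > 1 /\ Rabs a < Rabs g) ->
  Rabs a <= Rmax (Rmax (Rabs s) (Rabs c)) (1 + 3 * sqrt (I + 1)).
Proof.
  intros HI HF He Hg N1 N2.
  set (r := sqrt (I + 1)).
  assert (Hr : 0 <= r) by apply sqrt_pos.
  assert (Hr2 : r * r = I + 1) by (apply sqrt_sqrt; lra).
  destruct (Rle_lt_dec (Rabs a) (Rmax (Rmax (Rabs s) (Rabs c)) (1 + 3 * r))) as [|Hc]; auto.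
  exfalso.
  assert (Has : Rabs a > Rabs s).
  { eapply Rle_lt_trans; [|exact Hc]. eapply Rle_trans; [apply Rmax_l|apply Rmax_l]. }
  assert (Hac : Rabs a > Rabs c).
  { eapply Rle_lt_trans; [|exact Hc]. eapply Rle_trans; [apply Rmax_r|apply Rmax_l]. }
  assert (HaK : Rabs a > 1 + 3 * r).
  { eapply Rle_lt_trans; [|exact Hc]. apply Rmax_r. }
  assert (Hs : Rabs s <= 1) by (destruct (Rle_lt_dec (Rabs s) 1); auto; exfalso; apply N1; lra).
  pose proof (abs_sq a) as Sa; pose proof (abs_sq s) as Ss; pose proof (abs_sq c) as Sc.
  pose proof (Rabs_pos a) as Pa; pose proof (Rabs_pos s) as Ps; pose proof (Rabs_pos c) as Pc.
  assert (Hsc : Rabs (s * c) = Rabs s * Rabs c) by apply Rabs_mult.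
  pose proof (Rabs_triang (a - s * c) (s * c)) as Tr.
  replace (a - s * c + s * c) with a in Tr by ring.
  destruct (Rle_lt_dec (Rabs c) 1) as [Hc1|Hc1].
  - assert (Q : (a - s*c) * (a - s*c) <= r * r).
    { assert ((a - s*c)*(a-s*c) = I + (1 - s*s)*(1 - c*c)) by (rewrite <- HF; ring).
      assert (s*s <= 1) by (rewrite <- Ss; replace 1 with (1*1) by ring; apply Rmult_le_compat; lra).
      assert (c*c <= 1) by (rewrite <- Sc; replace 1 with (1*1) by ring; apply Rmult_le_compat; lra).
      assert (0 <= s*s) by apply Rle_0_sqr. assert (0 <= c*c) by apply Rle_0_sqr.
      assert ((1 - s*s)*(1-c*c) <= 1 * 1) by (apply Rmult_le_compat; lra).
      lra. }
    apply sq_abs_le in Q; auto.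
    assert (Rabs s * Rabs c <= 1 * 1) by (apply Rmult_le_compat; lra).
    lra.
  - assert (Hss : s*s <= 1) by (rewrite <- Ss; replace 1 with (1*1) by ring; apply Rmult_le_compat; lra).
    assert (Hs0 : 0 <= s*s) by apply Rle_0_sqr.
    assert (Haa : a*a >= 1) by (rewrite <- Sa; replace 1 with (1*1) by ring; apply Rle_ge, Rmult_le_compat; lra).
    assert (Hcc : c*c >= 1) by (rewrite <- Sc; replace 1 with (1*1) by ring; apply Rle_ge, Rmult_le_compat; lra).
    assert (He1 : Rabs e <= 1).
    { destruct (Rle_lt_dec (Rabs e) 1) as [|He1]; auto. exfalso.
      assert (G : Rabs g <= Rabs e \/ Rabs g <= Rabs a).
      { destruct (Rle_lt_dec (Rabs g) (Rabs e)); auto.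
        destruct (Rle_lt_dec (Rabs g) (Rabs a)); auto. exfalso; apply N2; lra. }
      assert (Hs' : s = 2 * e * a - g) by lra.
      pose proof (Rabs_triang_inv (2 * e * a) g) as T.
      rewrite <- Hs' in T. rewrite !Rabs_mult, (Rabs_right 2) in T by lra.
      assert ((Rabs e - 1) * (Rabs a - 1) > 0) by (apply Rmult_lt_0_compat; lra).
      destruct G; lra. }
    assert (Q1 : (c - e) * (c - e) <= (2*r) * (2*r)).
    { assert (E1 : (c - a*s)*(c - a*s) = I + (1 - a*a)*(1 - s*s)) by (rewrite <- HF; ring).
      assert (E2 : (c - e) = 2 * (c - a*s)) by (rewrite He; ring).
      assert (0 <= (a*a - 1)*(1 - s*s)) by (apply Rmult_le_pos; lra).
      rewrite E2. replace (2 * (c - a * s) * (2 * (c - a * s))) with (4 * ((c - a*s)*(c - a*s))) by ring.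
      rewrite E1. replace (2 * r * (2 * r)) with (4 * (r * r)) by ring. rewrite Hr2.
      replace ((1 - a*a)*(1 - s*s)) with (- ((a*a - 1)*(1 - s*s))) by ring. lra. }
    apply sq_abs_le in Q1; [|lra].
    pose proof (Rabs_triang (c - e) e) as T2. replace (c - e + e) with c in T2 by ring.
    assert (Q : (a - s*c) * (a - s*c) <= r * r).
    { assert (E1 : (a - s*c)*(a-s*c) = I + (1 - s*s)*(1 - c*c)) by (rewrite <- HF; ring).
      assert (0 <= (1 - s*s)*(c*c - 1)) by (apply Rmult_le_pos; lra).
      rewrite E1, Hr2.
      replace ((1 - s*s)*(1 - c*c)) with (- ((1 - s*s)*(c*c - 1))) by ring. lra. }
    apply sq_abs_le in Q; auto.
    assert (0 <= (1 - Rabs s) * Rabs c) by (apply Rmult_le_pos; lra).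
    lra.
Qed.

Lemma dist0_le (t : pt) : dist3 t (0,0,0) <= Rabs (PX t) + Rabs (PY t) + Rabs (PZ t).
Proof.
  destruct t as [[x y] z]; unfold dist3, PX, PY, PZ; simpl.
  pose proof (Rabs_pos x); pose proof (Rabs_pos y); pose proof (Rabs_pos z).
  rewrite <- (sqrt_square (Rabs x + Rabs y + Rabs z)) by lra.
  apply sqrt_le_1_alt.
  rewrite !Rminus_0_r, !Rmult_1_r.
  rewrite <- (abs_sq x), <- (abs_sq y), <- (abs_sq z).
  assert (0 <= Rabs x * Rabs y) by (apply Rmult_le_pos; lra).
  assert (0 <= Rabs x * Rabs z) by (apply Rmult_le_pos; lra).
  assert (0 <= Rabs y * Rabs z) by (apply Rmult_le_pos; lra).
  lra.
Qed.

Lemma bounded_crit (p : pt) : 0 <= FV p -> (forall k, ~ E (Nat.iter k F p)) -> bounded_fwd_orbit p.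
Proof.
  intros HI HE.
  set (K := 1 + 3 * sqrt (FV p + 1)).
  set (B := Rmax (Rmax (Rmax (Rabs (PX p)) (Rabs (PY p))) (Rabs (PZ p))) K).
  assert (HK : K <= B) by apply Rmax_r.
  assert (Cl : forall k, Rabs (PX (Nat.iter k F p)) <= B /\ Rabs (PY (Nat.iter k F p)) <= B
                 /\ Rabs (PZ (Nat.iter k F p)) <= B).
  { induction k as [|k [IX [IY IZ]]].
    - simpl. unfold B. split; [|split]; apply Rmax_Rle; left.
      + apply Rmax_Rle; left; apply Rmax_Rle; left; apply Rle_refl.
      + apply Rmax_Rle; left; apply Rmax_Rle; right; apply Rle_refl.
      + apply Rmax_Rle; right; apply Rle_refl.
    - set (t := Nat.iter k F p) in *.
      assert (Ht : Nat.iter (S k) F p = F t) by reflexivity.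
      rewrite Ht, PY_f, PZ_f. split; [|split]; auto.
      assert (H1 : PX (F t) ^ 2 + PX t ^ 2 + PY t ^ 2 - 2 * PX (F t) * PX t * PY t - 1 = FV p).
      { rewrite <- (FV_iter (S k) p), Ht, FV_XYZ, PY_f, PZ_f. reflexivity. }
      assert (H2 : PX (F (F t)) = 2 * PX (F t) * PX t - PY t).
      { rewrite (PX_f (F t)), PY_f, PZ_f. reflexivity. }
      assert (H3 : PX (F (F (F t))) = 2 * PX (F (F t)) * PX (F t) - PX t).
      { rewrite (PX_f (F (F t))), (PY_f (F t)), (PZ_f (F t)), PY_f. reflexivity. }
      assert (N1 : ~ (Rabs (PX (F t)) > Rabs (PX t) /\ Rabs (PX t) > 1 /\ Rabs (PY t) < Rabs (PX (F t)))).
      { pose proof (HE (S k)) as N. rewrite Ht in N. unfold E in N. rewrite PY_f, PZ_f in N. exact N. }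
      assert (N3 : ~ (Rabs (PX (F (F (F t)))) > Rabs (PX (F (F t))) /\ Rabs (PX (F (F t))) > 1 /\ Rabs (PX (F t)) < Rabs (PX (F (F (F t)))))).
      { pose proof (HE (S (S (S k)))) as N.
        replace (Nat.iter (S (S (S k))) F p) with (F (F (F t))) in N by reflexivity.
        unfold E in N. rewrite (PY_f (F (F t))), (PZ_f (F (F t))), (PY_f (F t)) in N. exact N. }
      pose proof (key _ _ _ _ _ _ HI H1 H2 H3 N1 N3) as Hk. fold K in Hk.
      eapply Rle_trans; [exact Hk|].
      apply Rmax_lub; auto. apply Rmax_lub; auto. }
  exists (3 * B). intro k. destruct (Cl k) as [A1 [A2 A3]].
  eapply Rle_trans; [apply dist0_le|]. lra.
Qed.

Theorem lemma4p2 (V0 : R) (V1 : option R) :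
  0 <= V0 -> le_ext V0 V1 ->
  closed3 (fun p => in_union_S V0 V1 p /\ bounded_fwd_orbit p).
Proof.
  intros HV0 HV1. unfold closed3, open3. intros p Hp.
  destruct (Rlt_le_dec (FV p) V0) as [Hlt|Hge].
  - destruct (pos_nbhd (fun q => V0 - FV q) p) as [eps [He Hq]].
    { apply cont3_minus; [apply cont3_const|apply cont3_FV]. }
    { simpl; lra. }
    exists eps; split; auto. intros q Hd [[V [HV [_ HF]]] _].
    specialize (Hq q Hd). simpl in Hq. lra.
  - assert (Hcase : (exists v, V1 = Some v /\ v < FV p) \/ le_ext (FV p) V1).
    { destruct V1 as [v|]; simpl; auto.
      destruct (Rlt_le_dec v (FV p)); [left; exists v; auto|right; auto]. }
    destruct Hcase as [[v [Ev Hv]]|Hin].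
    + destruct (pos_nbhd (fun q => FV q - v) p) as [eps [He Hq]].
      { apply cont3_minus; [apply cont3_FV|apply cont3_const]. }
      { simpl; lra. }
      exists eps; split; auto. intros q Hd [[V [HV [HL HF]]] _].
      specialize (Hq q Hd). simpl in Hq. subst V1. simpl in HL. lra.
    + assert (Hnb : ~ bounded_fwd_orbit p).
      { intro Hb. apply Hp. split; auto. exists (FV p); auto. }
      assert (Hex : exists k, E (Nat.iter k F p)).
      { apply NNPP. intro Hn. apply Hnb. apply bounded_crit; [lra|].
        intros k Hk. apply Hn. exists k; auto. }
      destruct Hex as [k Hk].
      destruct (cont3_iter k) as [CX [CY CZ]].
      destruct Hk as [E1 [E2 E3]].
      destruct (pos_nbhd (fun q => Rabs (PX (Nat.iter k F q)) - Rabs (PY (Nat.iter k F q))) p)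
        as [e1 [He1 H1]].
      { apply cont3_minus; apply cont3_abs; auto. }
      { simpl; lra. }
      destruct (pos_nbhd (fun q => Rabs (PY (Nat.iter k F q)) - 1) p) as [e2 [He2 H2]].
      { apply cont3_minus; [apply cont3_abs; auto|apply cont3_const]. }
      { simpl; lra. }
      destruct (pos_nbhd (fun q => Rabs (PX (Nat.iter k F q)) - Rabs (PZ (Nat.iter k F q))) p)
        as [e3 [He3 H3]].
      { apply cont3_minus; apply cont3_abs; auto. }
      { simpl; lra. }
      exists (Rmin e1 (Rmin e2 e3)). split.
      { apply Rmin_pos; auto. apply Rmin_pos; auto. }
      intros q Hd [_ Hb].
      assert (d1 : dist3 p q < e1) by (eapply Rlt_le_trans; [exact Hd|apply Rmin_l]).
      assert (d2 : dist3 p q < e2).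
      { eapply Rlt_le_trans; [exact Hd|]. eapply Rle_trans; [apply Rmin_r|apply Rmin_l]. }
      assert (d3 : dist3 p q < e3).
      { eapply Rlt_le_trans; [exact Hd|]. eapply Rle_trans; [apply Rmin_r|apply Rmin_r]. }
      specialize (H1 q d1); specialize (H2 q d2); specialize (H3 q d3). simpl in *.
      apply (escape q k); auto. unfold E. lra.
Qed.
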